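(* Let $\mathbb C_4$ be the complex Clifford algebra generated by $e_1,\dots,e_4$ with $e_je_l+e_le_j=-2\delta_{jl}$, $e_{ij}=e_ie_j$. Let $S^+_4$ be the span of $v^+=\frac14(1-ie_{12})(1-ie_{34})$ and $v^-=\frac14(e_1+ie_2)(e_3+ie_4)$, and let $S^-_4$ be the span of $v^+=\frac14(1-ie_{12})(e_3+ie_4)$ and $v^-=\frac14(e_1+ie_2)(1-ie_{34})$; each is a realization of the basic spinor representation $S$ of $Spin(3)$ under left Clifford multiplication by $e_1,e_2,e_3$. Write $(a,b)$ for $a v^++b v^-$. For $k\in\mathbb N_0$ let $\mathcal M_k(\mathbb R^3,S^\pm_4)$ be the space of $S^\pm_4$-valued $k$-homogeneous polynomials $P$ on $\mathbb R^3$ with $(e_1\partial_{x_1}+e_2\partial_{x_2}+e_3\partial_{x_3})P=0$, and define its basis $F^{k,\pm}_0=\frac{1}{k!2^k}\overline z^k v^+$, $F^{k,\pm}_j=(\tilde X^-)^jF^{k,\pm}_0$ ($0<j\le 2k+1$), where $z=x_1+ix_2$, $\overline z=x_1-ix_2$, $\tilde X^-=2x_3\frac{\partial}{\partial\overline z}-z\frac{\partial}{\partial x_3}+\frac12(-e_{31}+ie_{23})$ with $\frac{\partial}{\partial \overline z}=\frac12(\partial_{x_1}+i\partial_{x_2})$ and the Clifford element acting by left multiplication. Using spherical coordinates $x_1=r\sin\theta\sin\varphi$, $x_2=r\sin\theta\cos\varphi$, $x_3=r\cos\theta$ ($r\ge0$, $-\pi\le\varphi\le\pi$, $0\le\theta\le\pi$),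 we have for each $j=0,\dots,2k+1$ $$F^{k,\pm}_j(r,\theta,\varphi)=i^{k-j}r^ke^{i(k-j)\varphi}\Big(P^{j-k}_k(\cos\theta),\ \pm\, ij\,e^{i\varphi}P^{j-k-1}_k(\cos\theta)\Big),$$ where $P^l_k(s)=\frac{1}{k!\,2^k}(1-s^2)^{l/2}\frac{d^{l+k}}{ds^{l+k}}(s^2-1)^k$ for $s\in\mathbb R$, and by convention $P^{k+1}_k=0=P^{-k-1}_k$.
   Context: $P^0_k$ is the $k$-th Legendre polynomial and $P^l_k$ are its associated Legendre functions. *)

(* Defs.v *)
From Stdlib Require Import Reals Factorial ZArith List.
From Coquelicot Require Import Coquelicot.
Import ListNotations.

Open Scope R_scope.

(* The complex Clifford algebra C_4 = Cl_{0,4} (x) C, realised on its  *)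
(* standard blade basis e_A, A a subset of {1,2,3,4} (encoded by four  *)
(* booleans).  e_A e_B = sgn(A,B) e_{A xor B} where the sign counts    *)
(* the transpositions needed to sort the word (pairs i in A, j in B,   *)
(* i > j) and one factor e_i e_i = -1 per common index.                *)

Definition blade : Type := (bool * bool * bool * bool)%type.

Definition bit (A : blade) (i : nat) : bool :=
  match A with (a1, a2, a3, a4) =>
    match i with 0 => a1 | 1 => a2 | 2 => a3 | 3 => a4 | _ => false end
  end.

Definition bxor (A B : blade) : blade :=
  match A, B with (a1, a2, a3, a4), (b1, b2, b3, b4) =>
    (xorb a1 b1, xorb a2 b2, xorb a3 b3, xorb a4 b4) end.

Definition blade_eqb (A B : blade) : bool :=
  match A, B with (a1, a2, a3, a4), (b1, b2, b3, b4) =>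
    Bool.eqb a1 b1 && Bool.eqb a2 b2 && Bool.eqb a3 b3 && Bool.eqb a4 b4 end.

Definition all_blades : list blade :=
  flat_map (fun a1 => flat_map (fun a2 => flat_map (fun a3 =>
    map (fun a4 => (a1, a2, a3, a4)) [false; true]) [false; true]) [false; true])
    [false; true].

Definition idx4 : list nat := [0; 1; 2; 3]%nat.

Definition blade_flips (A B : blade) : nat :=
  (length (filter (fun ij => let '(i, j) := ij in
             (Nat.ltb j i && bit A i && bit B j)%bool)
           (list_prod idx4 idx4))
   + length (filter (fun i => (bit A i && bit B i)%bool) idx4))%nat.

Definition blade_sign (A B : blade) : C :=
  if Nat.even (blade_flips A B) then RtoC 1 else RtoC (-1).

Definition Cl4 : Type := blade -> C.

Definition csum (l : list blade) (f : blade -> C) : C :=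
  fold_right (fun A acc => Cplus (f A) acc) (RtoC 0) l.

Definition cl_add (a b : Cl4) : Cl4 := fun A => Cplus (a A) (b A).
Definition cl_scal (c : C) (a : Cl4) : Cl4 := fun A => Cmult c (a A).
Definition cl_opp (a : Cl4) : Cl4 := cl_scal (RtoC (-1)) a.
Definition cl_mul (a b : Cl4) : Cl4 :=
  fun D => csum all_blades
             (fun A => Cmult (blade_sign A (bxor A D)) (Cmult (a A) (b (bxor A D)))).

Definition cl_basis (A : blade) : Cl4 :=
  fun B => if blade_eqb A B then RtoC 1 else RtoC 0.

Definition cl_one : Cl4 := cl_basis (false, false, false, false).
Definition e1 : Cl4 := cl_basis (true, false, false, false).
Definition e2 : Cl4 := cl_basis (false, true, false, false).
Definition e3 : Cl4 := cl_basis (false, false, true, false).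
Definition e4 : Cl4 := cl_basis (false, false, false, true).

Definition e12 : Cl4 := cl_mul e1 e2.
Definition e34 : Cl4 := cl_mul e3 e4.
Definition e31 : Cl4 := cl_mul e3 e1.
Definition e23 : Cl4 := cl_mul e2 e3.

Definition f12 : Cl4 := cl_add cl_one (cl_scal (Copp Ci) e12).
Definition f34 : Cl4 := cl_add cl_one (cl_scal (Copp Ci) e34).
Definition g12 : Cl4 := cl_add e1 (cl_scal Ci e2).
Definition g34 : Cl4 := cl_add e3 (cl_scal Ci e4).

(* The two spinor spaces: s = true for S^+_4, s = false for S^-_4. *)
Definition vplus (s : bool) : Cl4 :=
  cl_scal (RtoC (1/4)) (if s then cl_mul f12 f34 else cl_mul f12 g34).
Definition vminus (s : bool) : Cl4 :=
  cl_scal (RtoC (1/4)) (if s then cl_mul g12 g34 else cl_mul g12 f34).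

Definition spinor_pair (s : bool) (a b : C) : Cl4 :=
  cl_add (cl_scal a (vplus s)) (cl_scal b (vminus s)).

Definition Fn3 : Type := R -> R -> R -> Cl4.

Definition DeriveC (f : R -> C) (t : R) : C :=
  (Derive (fun u => fst (f u)) t, Derive (fun u => snd (f u)) t).

Definition d1 (G : Fn3) : Fn3 :=
  fun x1 x2 x3 A => DeriveC (fun t => G t x2 x3 A) x1.
Definition d2 (G : Fn3) : Fn3 :=
  fun x1 x2 x3 A => DeriveC (fun t => G x1 t x3 A) x2.
Definition d3 (G : Fn3) : Fn3 :=
  fun x1 x2 x3 A => DeriveC (fun t => G x1 x2 t A) x3.

Definition zc (x1 x2 : R) : C := (x1, x2).
Definition zbar (x1 x2 : R) : C := (x1, - x2).

Definition dzbar (G : Fn3) : Fn3 :=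
  fun x1 x2 x3 => cl_scal (RtoC (1/2)) (cl_add (d1 G x1 x2 x3) (cl_scal Ci (d2 G x1 x2 x3))).

Definition Xcl : Cl4 := cl_scal (RtoC (1/2)) (cl_add (cl_opp e31) (cl_scal Ci e23)).

Definition Xminus (G : Fn3) : Fn3 :=
  fun x1 x2 x3 =>
    cl_add (cl_add (cl_scal (RtoC (2 * x3)) (dzbar G x1 x2 x3))
                   (cl_scal (Copp (zc x1 x2)) (d3 G x1 x2 x3)))
           (cl_mul Xcl (G x1 x2 x3)).

Definition F0 (s : bool) (k : nat) : Fn3 :=
  fun x1 x2 x3 =>
    cl_scal (Cmult (RtoC (/ (INR (fact k) * 2 ^ k))) (Cpow (zbar x1 x2) k)) (vplus s).

Definition F (s : bool) (k j : nat) : Fn3 := Nat.iter j Xminus (F0 s k).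

(* with P^l_k = 0 when l + k < 0 (covers the convention P^{-k-1}_k=0); *)
(* P^{k+1}_k = 0 holds automatically (derivative of order 2k+1 of a     *)
(* polynomial of degree 2k).  (1-s^2)^{l/2} is sqrt(1-s^2)^l for l>=0   *)
(* and 1/sqrt(1-s^2)^(-l) for l<0.                                      *)

Definition half_pow (x : R) (l : Z) : R :=
  if (0 <=? l)%Z then sqrt x ^ Z.to_nat l else / (sqrt x ^ Z.to_nat (- l)).

Definition assocLegendre (l : Z) (k : nat) (s : R) : R :=
  if (l + Z.of_nat k <? 0)%Z then 0
  else / (INR (fact k) * 2 ^ k) * half_pow (1 - s ^ 2) l
       * Derive_n (fun u => (u ^ 2 - 1) ^ k) (Z.to_nat (l + Z.of_nat k)) s.

Definition cexpi (t : R) : C := (cos t, sin t).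

Definition Ci_zpow (n : Z) : C :=
  if (0 <=? n)%Z then Cpow Ci (Z.to_nat n) else Cpow (Copp Ci) (Z.to_nat (- n)).

(* Main.v *)
From Pilot Require Import Defs.
From Stdlib Require Import Reals ZArith FunctionalExtensionality Lra Lia.
From Coquelicot Require Import Coquelicot.
Set Bullet Behavior "Strict Subproofs".


Lemma rd_plus (f g : R -> R) t a b : is_derive f t a -> is_derive g t b -> is_derive (fun u => f u + g u) t (a + b).
Proof. intros; apply (is_derive_plus (K:=R_AbsRing) (V:=R_NormedModule)); auto. Qed.
Lemma rd_minus (f g : R -> R) t a b : is_derive f t a -> is_derive g t b -> is_derive (fun u => f u - g u) t (a - b).
Proof. intros; apply (is_derive_minus (K:=R_AbsRing) (V:=R_NormedModule)); auto. Qed.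
Lemma rd_mult (f g : R -> R) t a b : is_derive f t a -> is_derive g t b ->
  is_derive (fun u => f u * g u) t (a * g t + f t * b).
Proof. intros. apply (is_derive_mult (K:=R_AbsRing)); auto. intros; apply Rmult_comm. Qed.
Lemma rd_const (c : R) t : is_derive (fun _ => c) t 0.
Proof. auto_derive; auto. Qed.
Lemma rd_id t : is_derive (fun u => u) t 1.
Proof. auto_derive; auto. Qed.
Lemma rd_ext (f g : R -> R) t a b : (forall u, f u = g u) -> a = b -> is_derive f t a -> is_derive g t b.
Proof. intros E <- H. eapply is_derive_ext; eauto. Qed.
Lemma rd_pow (f : R -> R) n t a : is_derive f t a -> is_derive (fun u => f u ^ n) t (INR n * a * f t ^ pred n).
Proof. apply is_derive_pow. Qed.

Definition cder (f : R -> C) (t : R) (l : C) :=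
  is_derive (fun u => fst (f u)) t (fst l) /\ is_derive (fun u => snd (f u)) t (snd l).

Lemma cder_DeriveC f t l : cder f t l -> DeriveC f t = l.
Proof.
  intros [H1 H2]. unfold DeriveC.
  assert (E1 : Derive (fun u => fst (f u)) t = fst l) by (apply is_derive_unique; exact H1).
  assert (E2 : Derive (fun u => snd (f u)) t = snd l) by (apply is_derive_unique; exact H2).
  rewrite E1, E2. destruct l; reflexivity.
Qed.

Lemma cder_ext f g t l l' : (forall u, f u = g u) -> l = l' -> cder f t l -> cder g t l'.
Proof.
  intros E <- [H1 H2]; split.
  - eapply rd_ext; [|reflexivity|exact H1]; intros; simpl; now rewrite E.
  - eapply rd_ext; [|reflexivity|exact H2]; intros; simpl; now rewrite E.
Qed.

Lemma cder_const c t : cder (fun _ => c) t (RtoC 0).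
Proof. split; simpl; apply rd_const. Qed.

Lemma cder_plus f g t a b : cder f t a -> cder g t b -> cder (fun u => Cplus (f u) (g u)) t (Cplus a b).
Proof. intros [F1 F2] [G1 G2]; split; simpl; apply rd_plus; auto. Qed.

Lemma alg1 (x1 x2 y1 y2 a1 a2 b1 b2 : R) : a1*y1 + x1*b1 - (a2*y2 + x2*b2) = a1*y1 - a2*y2 + (x1*b1 - x2*b2).
Proof. ring. Qed.
Lemma alg2 (x1 x2 y1 y2 a1 a2 b1 b2 : R) : a1*y2 + x1*b2 + (a2*y1 + x2*b1) = a1*y2 + a2*y1 + (x1*b2 + x2*b1).
Proof. ring. Qed.

Lemma cder_mult f g t a b : cder f t a -> cder g t b ->
  cder (fun u => Cmult (f u) (g u)) t (Cplus (Cmult a (g t)) (Cmult (f t) b)).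
Proof.
  intros [F1 F2] [G1 G2]; split; simpl.
  - refine (rd_ext _ _ t _ _ _ _ (rd_minus _ _ _ _ _ (rd_mult _ _ _ _ _ F1 G1) (rd_mult _ _ _ _ _ F2 G2)));
    [intros; reflexivity| apply alg1].
  - refine (rd_ext _ _ t _ _ _ _ (rd_plus _ _ _ _ _ (rd_mult _ _ _ _ _ F1 G2) (rd_mult _ _ _ _ _ F2 G1)));
    [intros; reflexivity| apply alg2].
Qed.

Lemma alg_pow (w a : C) (n : nat) :
  Cplus (Cmult a (Cpow w n)) (Cmult w (Cmult (RtoC (INR n)) (Cmult (Cpow w (pred n)) a)))
  = Cmult (RtoC (INR (S n))) (Cmult (Cpow w (pred (S n))) a).
Proof.
  destruct n.
  - simpl. apply injective_projections; simpl; ring.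
  - simpl pred. rewrite (S_INR (S n)), RtoC_plus, Cpow_S. ring.
Qed.

Lemma cder_pow f t a n : cder f t a -> cder (fun u => Cpow (f u) n) t (Cmult (RtoC (INR n)) (Cmult (Cpow (f t) (pred n)) a)).
Proof.
  intros H. induction n.
  - refine (cder_ext _ _ _ _ _ _ _ (cder_const (RtoC 1) t)).
    + intros; reflexivity.
    + generalize (f t); intro w. apply injective_projections; simpl; ring.
  - refine (cder_ext _ _ _ _ _ _ _ (cder_mult _ _ _ _ _ H IHn)).
    + intros; reflexivity.
    + apply alg_pow.
Qed.

Lemma cder_RtoC (g : R -> R) t l : is_derive g t l -> cder (fun u => RtoC (g u)) t (RtoC l).
Proof. intros H; split; simpl; [exact H| apply rd_const]. Qed.

Fixpoint sumC (f : nat -> C) (n : nat) : C :=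
  match n with O => f O | S n' => Cplus (sumC f n') (f (S n')) end.
Fixpoint sumR (f : nat -> R) (n : nat) : R :=
  match n with O => f O | S n' => sumR f n' + f (S n') end.

Lemma sumC_ext f g n : (forall c, (c <= n)%nat -> f c = g c) -> sumC f n = sumC g n.
Proof. induction n; intros H; simpl. - apply H; lia. - rewrite IHn by (intros; apply H; lia). rewrite H by lia. reflexivity. Qed.
Lemma sumC_plus f g n : sumC (fun c => Cplus (f c) (g c)) n = Cplus (sumC f n) (sumC g n).
Proof. induction n; simpl; [reflexivity|]. rewrite IHn. ring. Qed.
Lemma sumC_scal K f n : sumC (fun c => Cmult K (f c)) n = Cmult K (sumC f n).
Proof. induction n; simpl; [reflexivity|]. rewrite IHn. ring. Qed.
Lemma sumC_shift f n : sumC f (S n) = Cplus (f O) (sumC (fun c => f (S c)) n).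
Proof. induction n; simpl in *; [reflexivity|]. rewrite IHn. ring. Qed.
Lemma sumC_RtoC f n : RtoC (sumR f n) = sumC (fun c => RtoC (f c)) n.
Proof. induction n; simpl; [reflexivity|]. rewrite RtoC_plus, IHn. reflexivity. Qed.
Lemma sumR_ext f g n : (forall c, (c <= n)%nat -> f c = g c) -> sumR f n = sumR g n.
Proof. induction n; intros H; simpl. - apply H; lia. - rewrite IHn by (intros; apply H; lia). rewrite H by lia. reflexivity. Qed.
Lemma sumR_scal K f n : sumR (fun c => K * f c) n = K * sumR f n.
Proof. induction n; simpl; [reflexivity|]. rewrite IHn. ring. Qed.

Fixpoint alpha (k m c : nat) : R :=
  match m with
  | O => if Nat.eqb c 0 then 1 else 0
  | S m' => 2 * INR (k + c - m') * alpha k m' c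
            - match c with O => 0 | S c' => INR (m' - 2 * c') * alpha k m' c' end
  end.

Lemma alpha_0 k c : alpha k 0 c = if Nat.eqb c 0 then 1 else 0.
Proof. reflexivity. Qed.
Lemma alpha_S k m c : alpha k (S m) c = 2 * INR (k + c - m) * alpha k m c
            - match c with O => 0 | S c' => INR (m - 2 * c') * alpha k m c' end.
Proof. reflexivity. Qed.

Lemma alpha_inv k m c : alpha k m c <> 0 -> (2 * c <= m /\ m <= k + c)%nat.
Proof.
  revert c; induction m; intros c H.
  - rewrite alpha_0 in H. destruct (Nat.eqb_spec c 0); [lia| lra].
  - rewrite alpha_S in H.
    destruct (Req_dec (alpha k m c) 0) as [E|E].
    + rewrite E in H. destruct c as [|c']; [lra|].
      destruct (Req_dec (alpha k m c') 0) as [E'|E']; [rewrite E' in H; lra|].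
      destruct (IHm _ E'). destruct (Nat.eq_dec (m - 2 * c') 0) as [Z|Z].
      * rewrite Z in H. simpl INR in H. lra.
      * lia.
    + destruct (IHm _ E). destruct (Nat.eq_dec (k + c - m) 0) as [Z|Z].
      * rewrite Z in H. destruct c as [|c']; [simpl INR in H; lra|].
        destruct (Req_dec (alpha k m c') 0) as [E'|E']; [rewrite E' in H; simpl INR in H; lra|].
        destruct (IHm _ E'). lia.
      * lia.
Qed.

Lemma alpha_big k m c : (m < c)%nat -> alpha k m c = 0.
Proof. intros H. destruct (Req_dec (alpha k m c) 0); auto. apply alpha_inv in H0. lia. Qed.

Lemma reindexC k m (T : nat -> C) :
  sumC (fun c => Cmult (RtoC (alpha k m c))
          (Cplus (Cmult (RtoC (2 * INR (k + c - m))) (T c))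
                 (Copp (Cmult (RtoC (INR (m - 2 * c))) (T (S c)))))) m
  = sumC (fun c => Cmult (RtoC (alpha k (S m) c)) (T c)) (S m).
Proof.
  set (A := fun c => Cmult (RtoC (2 * INR (k + c - m) * alpha k m c)) (T c)).
  set (B := fun c => Cmult (RtoC (match c with O => 0 | S c' => INR (m - 2 * c') * alpha k m c' end)) (T c)).
  assert (E1 : sumC (fun c => Cmult (RtoC (alpha k (S m) c)) (T c)) (S m)
            = Cplus (sumC A (S m)) (Cmult (RtoC (-1)) (sumC B (S m)))).
  { rewrite <- sumC_scal, <- sumC_plus. apply sumC_ext; intros c _.
    unfold A, B. rewrite alpha_S, RtoC_minus, !RtoC_mult. ring. }
  assert (E2 : sumC A (S m) = sumC A m).
  { simpl. unfold A at 2. rewrite (alpha_big k m (S m)) by lia. rewrite RtoC_mult. ring. }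
  assert (E3 : sumC B (S m) = sumC (fun c => Cmult (RtoC (INR (m - 2 * c) * alpha k m c)) (T (S c))) m).
  { rewrite sumC_shift. unfold B at 1. simpl (match O with O => 0 | _ => _ end).
    rewrite Cmult_0_l, Cplus_0_l. apply sumC_ext; intros; reflexivity. }
  rewrite E1, E2, E3, <- sumC_scal, <- sumC_plus. apply sumC_ext; intros c _.
  unfold A. rewrite !RtoC_mult. ring.
Qed.

Lemma rd_sum (f : nat -> R -> R) d t n : (forall c, (c <= n)%nat -> is_derive (f c) t (d c)) ->
  is_derive (fun u => sumR (fun c => f c u) n) t (sumR d n).
Proof.
  induction n; intros H; simpl.
  - apply H; lia.
  - apply rd_plus; [apply IHn; intros; apply H; lia | apply H; lia].
Qed.

Lemma RtoC_inj x y : RtoC x = RtoC y -> x = y.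
Proof. intros H. apply (f_equal fst) in H. exact H. Qed.

Section RealSide.
Variables (k : nat) (p q u : R).
Definition Pf (t : R) := p + 2 * q * t - u * t ^ 2.
Definition Qf (t : R) := q - u * t.
Definition termR (m c : nat) (t : R) := alpha k m c * (Pf t ^ (k + c - m) * (Qf t ^ (m - 2 * c) * u ^ c)).

Lemma Pf_der t : is_derive Pf t (2 * Qf t).
Proof. unfold Pf, Qf. auto_derive; auto. ring. Qed.
Lemma Qf_der t : is_derive Qf t (- u).
Proof. unfold Qf. auto_derive; auto. ring. Qed.

Lemma termR_der m c t : is_derive (termR m c) t
  (alpha k m c * (INR (k + c - m) * (2 * Qf t) * Pf t ^ pred (k + c - m) * (Qf t ^ (m - 2 * c) * u ^ c)
    + Pf t ^ (k + c - m) * (INR (m - 2 * c) * (- u) * Qf t ^ pred (m - 2 * c) * u ^ c))).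
Proof.
  unfold termR.
  refine (rd_ext _ _ t _ _ _ _ (rd_mult _ _ t _ _ (rd_const (alpha k m c) t)
     (rd_mult _ _ t _ _ (rd_pow _ (k + c - m) t _ (Pf_der t))
         (rd_mult _ _ t _ _ (rd_pow _ (m - 2 * c) t _ (Qf_der t)) (rd_const (u ^ c) t))))).
  - intros; reflexivity.
  - match goal with |- ?a = ?b => change (@eq R a b) end. ring.
Qed.

Lemma term_step m c t :
  alpha k m c * (INR (k + c - m) * (2 * Qf t) * Pf t ^ pred (k + c - m) * (Qf t ^ (m - 2 * c) * u ^ c)
    + Pf t ^ (k + c - m) * (INR (m - 2 * c) * (- u) * Qf t ^ pred (m - 2 * c) * u ^ c))
  = alpha k m c * (2 * INR (k + c - m) * (Pf t ^ (k + c - S m) * (Qf t ^ (S m - 2 * c) * u ^ c))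
     - INR (m - 2 * c) * (Pf t ^ (k + S c - S m) * (Qf t ^ (S m - 2 * S c) * u ^ S c))).
Proof.
  destruct (Req_dec (alpha k m c) 0) as [Z|Z]; [rewrite Z; ring|].
  apply alpha_inv in Z. destruct Z as [Z1 Z2].
  replace (k + S c - S m)%nat with (k + c - m)%nat by lia.
  replace (S m - 2 * S c)%nat with (pred (m - 2 * c)) by lia.
  replace (S m - 2 * c)%nat with (S (m - 2 * c)) by lia.
  destruct (Nat.eq_dec (k + c - m) 0) as [A|A].
  - rewrite A. simpl INR. rewrite <- !tech_pow_Rmult. ring.
  - replace (k + c - S m)%nat with (pred (k + c - m)) by lia. rewrite <- !tech_pow_Rmult. ring.
Qed.

Lemma real_side : forall m t, Derive_n (fun t => Pf t ^ k) m t = sumR (fun c => termR m c t) m.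
Proof.
  induction m; intros t.
  - simpl. unfold termR. rewrite alpha_0. simpl. replace (k + 0 - 0)%nat with k by lia. ring.
  - simpl Derive_n. rewrite (Derive_ext _ (fun t => sumR (fun c => termR m c t) m) t IHm).
    apply is_derive_unique.
    eapply rd_ext; [intros; reflexivity| |apply rd_sum; intros c _; apply termR_der].
    apply RtoC_inj. rewrite !sumC_RtoC.
    rewrite (sumC_ext (fun c => RtoC (termR (S m) c t))
       (fun c => Cmult (RtoC (alpha k (S m) c)) (RtoC (Pf t ^ (k + c - S m) * (Qf t ^ (S m - 2 * c) * u ^ c)))))
      by (intros; unfold termR; rewrite RtoC_mult; reflexivity).
    rewrite <- (reindexC k m (fun c => RtoC (Pf t ^ (k + c - S m) * (Qf t ^ (S m - 2 * c) * u ^ c)))).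
    apply sumC_ext; intros c _. rewrite term_step.
    rewrite RtoC_mult, RtoC_minus, !RtoC_mult. ring.
Qed.
End RealSide.

Lemma zb1 x1 x2 : cder (fun t => zbar t x2) x1 (RtoC 1).
Proof. split; unfold zbar; simpl; auto_derive; auto. Qed.
Lemma zb2 x1 x2 : cder (fun t => zbar x1 t) x2 (Copp Ci).
Proof. split; unfold zbar; simpl; auto_derive; auto; ring. Qed.
Lemma zc1 x1 x2 : cder (fun t => zc t x2) x1 (RtoC 1).
Proof. split; unfold zc; simpl; auto_derive; auto. Qed.
Lemma zc2 x1 x2 : cder (fun t => zc x1 t) x2 Ci.
Proof. split; unfold zc; simpl; auto_derive; auto. Qed.
Lemma x3pow b x3 : cder (fun t => RtoC (t ^ b)) x3 (RtoC (INR b * x3 ^ pred b)).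
Proof.
  apply cder_RtoC. refine (rd_ext _ _ x3 _ _ _ _ (rd_pow _ b x3 _ (rd_id x3))); [intros; reflexivity|].
  match goal with |- ?a = ?b => change (@eq R a b) end. ring.
Qed.

Definition Mon (a b c : nat) (x1 x2 x3 : R) : C :=
  Cmult (Cpow (zbar x1 x2) a) (Cmult (RtoC (x3 ^ b)) (Cpow (zc x1 x2) c)).

Lemma Mon_d1 a b c x1 x2 x3 : cder (fun t => Mon a b c t x2 x3) x1
  (Cplus (Cmult (RtoC (INR a)) (Mon (pred a) b c x1 x2 x3)) (Cmult (RtoC (INR c)) (Mon a b (pred c) x1 x2 x3))).
Proof.
  refine (cder_ext _ _ _ _ _ _ _ (cder_mult _ _ _ _ _ (cder_pow _ _ _ a (zb1 x1 x2))
            (cder_mult _ _ _ _ _ (cder_const (RtoC (x3^b)) x1) (cder_pow _ _ _ c (zc1 x1 x2))))).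
  - intros; reflexivity.
  - unfold Mon. generalize (zbar x1 x2) (zc x1 x2) (RtoC (x3^b)); intros. ring.
Qed.

Lemma Mon_d2 a b c x1 x2 x3 : cder (fun t => Mon a b c x1 t x3) x2
  (Cmult Ci (Cplus (Cmult (RtoC (INR c)) (Mon a b (pred c) x1 x2 x3)) (Copp (Cmult (RtoC (INR a)) (Mon (pred a) b c x1 x2 x3))))).
Proof.
  refine (cder_ext _ _ _ _ _ _ _ (cder_mult _ _ _ _ _ (cder_pow _ _ _ a (zb2 x1 x2))
            (cder_mult _ _ _ _ _ (cder_const (RtoC (x3^b)) x2) (cder_pow _ _ _ c (zc2 x1 x2))))).
  - intros; reflexivity.
  - unfold Mon. generalize (zbar x1 x2) (zc x1 x2) (RtoC (x3^b)); intros. ring.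
Qed.

Lemma Mon_d3 a b c x1 x2 x3 : cder (fun t => Mon a b c x1 x2 t) x3
  (Cmult (RtoC (INR b)) (Mon a (pred b) c x1 x2 x3)).
Proof.
  refine (cder_ext _ _ _ _ _ _ _ (cder_mult _ _ _ _ _ (cder_const (Cpow (zbar x1 x2) a) x3)
            (cder_mult _ _ _ _ _ (x3pow b x3) (cder_const (Cpow (zc x1 x2) c) x3)))).
  - intros; reflexivity.
  - unfold Mon. rewrite RtoC_mult. generalize (Cpow (zbar x1 x2) a) (Cpow (zc x1 x2) c) (RtoC (x3^pred b)); intros. ring.
Qed.

Lemma cder_sum (f : nat -> R -> C) d t n : (forall c, (c <= n)%nat -> cder (f c) t (d c)) ->
  cder (fun u => sumC (fun c => f c u) n) t (sumC d n).
Proof.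
  induction n; intros H; simpl.
  - apply H; lia.
  - apply cder_plus; [apply IHn; intros; apply H; lia | apply H; lia].
Qed.

Lemma cder_scal K f t a : cder f t a -> cder (fun u => Cmult K (f u)) t (Cmult K a).
Proof.
  intros H. refine (cder_ext _ _ _ _ _ _ _ (cder_mult _ _ _ _ _ (cder_const K t) H)).
  - intros; reflexivity.
  - generalize (f t); intros. ring.
Qed.

Definition Fs3 := R -> R -> R -> C.

Definition HP (A A1 A2 A3 : Fs3) := forall x1 x2 x3,
  cder (fun t => A t x2 x3) x1 (A1 x1 x2 x3) /\
  cder (fun t => A x1 t x3) x2 (A2 x1 x2 x3) /\
  cder (fun t => A x1 x2 t) x3 (A3 x1 x2 x3).

Definition DopV (x1 x2 x3 : R) (a1 a2 a3 : C) : C :=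
  Cplus (Cmult (RtoC (2 * x3)) (Cmult (RtoC (1/2)) (Cplus a1 (Cmult Ci a2))))
        (Cmult (Copp (zc x1 x2)) a3).

Lemma DopV_sum x1 x2 x3 f1 f2 f3 n :
  DopV x1 x2 x3 (sumC f1 n) (sumC f2 n) (sumC f3 n) = sumC (fun c => DopV x1 x2 x3 (f1 c) (f2 c) (f3 c)) n.
Proof. induction n; simpl; [reflexivity|]. rewrite <- IHn. unfold DopV. ring. Qed.

Section Gdef.
Variable k : nat.
Definition Gt (m c : nat) (x1 x2 x3 : R) : C :=
  Cmult (RtoC (alpha k m c)) (Mon (k + c - m) (m - 2 * c) c x1 x2 x3).
Definition G (m : nat) : Fs3 := fun x1 x2 x3 => sumC (fun c => Gt m c x1 x2 x3) m.
Definition G1 (m : nat) : Fs3 := fun x1 x2 x3 => sumC (fun c => Cmult (RtoC (alpha k m c))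
  (Cplus (Cmult (RtoC (INR (k + c - m))) (Mon (pred (k + c - m)) (m - 2 * c) c x1 x2 x3))
         (Cmult (RtoC (INR c)) (Mon (k + c - m) (m - 2 * c) (pred c) x1 x2 x3)))) m.
Definition G2 (m : nat) : Fs3 := fun x1 x2 x3 => sumC (fun c => Cmult (RtoC (alpha k m c))
  (Cmult Ci (Cplus (Cmult (RtoC (INR c)) (Mon (k + c - m) (m - 2 * c) (pred c) x1 x2 x3))
         (Copp (Cmult (RtoC (INR (k + c - m))) (Mon (pred (k + c - m)) (m - 2 * c) c x1 x2 x3)))))) m.
Definition G3 (m : nat) : Fs3 := fun x1 x2 x3 => sumC (fun c => Cmult (RtoC (alpha k m c))
  (Cmult (RtoC (INR (m - 2 * c))) (Mon (k + c - m) (pred (m - 2 * c)) c x1 x2 x3))) m.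

Lemma G_HP m : HP (G m) (G1 m) (G2 m) (G3 m).
Proof.
  intros x1 x2 x3; unfold G, G1, G2, G3, Gt; split; [|split]; apply cder_sum; intros c _; apply cder_scal.
  - apply Mon_d1.
  - apply Mon_d2.
  - apply Mon_d3.
Qed.

Lemma Ci_sq : Cmult Ci Ci = RtoC (-1).
Proof. apply injective_projections; simpl; ring. Qed.

Lemma dop_alg (al A Cc B z M1 M1' M2 M3 : C) (r : R) :
  Cmult A M1 = Cmult A M1' ->
  Cplus (Cmult (Cmult (RtoC 2) (RtoC r)) (Cmult (RtoC (1/2)) (Cplus (Cmult al (Cplus (Cmult A M1) (Cmult Cc M2))) (Cmult Ci (Cmult al (Cmult Ci (Cplus (Cmult Cc M2) (Copp (Cmult A M1))))))))) (Cmult (Copp z) (Cmult al (Cmult B M3)))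
  = Cmult al (Cplus (Cmult (Cmult (RtoC 2) A) (Cmult (RtoC r) M1')) (Copp (Cmult B (Cmult z M3)))).
Proof.
  intros H. rewrite H.
  assert (Hh : Cmult (RtoC 2) (RtoC (1/2)) = RtoC 1) by (rewrite <- RtoC_mult; f_equal; field).
  assert (Hi : Cmult Ci Ci = Copp (RtoC 1)) by (apply injective_projections; simpl; ring).
  generalize (RtoC (1/2)) Ci Hh Hi; intros h i Hh' Hi'.
  transitivity (Cplus (Cmult (Cmult (RtoC 2) h) (Cmult (RtoC r) (Cplus (Cmult al (Cplus (Cmult A M1') (Cmult Cc M2))) (Cmult (Cmult i i) (Cmult al (Cplus (Cmult Cc M2) (Copp (Cmult A M1')))))))) (Cmult (Copp z) (Cmult al (Cmult B M3)))).
  - ring.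
  - rewrite Hh', Hi'. ring.
Qed.

Lemma G_step m x1 x2 x3 : DopV x1 x2 x3 (G1 m x1 x2 x3) (G2 m x1 x2 x3) (G3 m x1 x2 x3) = G (S m) x1 x2 x3.
Proof.
  unfold G1, G2, G3, G. rewrite DopV_sum.
  unfold Gt. rewrite <- (reindexC k m (fun c => Mon (k + c - S m) (S m - 2 * c) c x1 x2 x3)).
  apply sumC_ext; intros c _.
  destruct (Req_dec (alpha k m c) 0) as [Z|Z].
  { rewrite Z. unfold DopV. ring. }
  apply alpha_inv in Z. destruct Z as [Z1 Z2].
  replace (k + S c - S m)%nat with (k + c - m)%nat by lia.
  replace (S m - 2 * S c)%nat with (pred (m - 2 * c)) by lia.
  replace (S m - 2 * c)%nat with (S (m - 2 * c)) by lia.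
  assert (HM : forall a b c', Mon a (S b) c' x1 x2 x3 = Cmult (RtoC x3) (Mon a b c' x1 x2 x3)
     /\ Mon a b (S c') x1 x2 x3 = Cmult (zc x1 x2) (Mon a b c' x1 x2 x3)).
  { intros; unfold Mon; split; [simpl pow; rewrite RtoC_mult | rewrite Cpow_S]; ring. }
  rewrite (proj2 (HM _ _ _)), (proj1 (HM _ _ _)).
  unfold DopV. rewrite (RtoC_mult 2 x3), (RtoC_mult 2 (INR (k + c - m))).
  apply dop_alg.
  destruct (Nat.eq_dec (k + c - m) 0) as [A|A].
  - rewrite A. simpl INR. ring.
  - replace (k + c - S m)%nat with (pred (k + c - m)) by lia. reflexivity.
Qed.
End Gdef.

Ltac bl := apply functional_extensionality; intros [[[[] []] []] []].
Ltac cfin := apply injective_projections; simpl; lra.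

Lemma e12_b : e12 = cl_basis (true,true,false,false).
Proof. bl; unfold e12, cl_mul, e1, e2, cl_basis, csum; simpl; cfin. Qed.
Lemma e34_b : e34 = cl_basis (false,false,true,true).
Proof. bl; unfold e34, cl_mul, e3, e4, cl_basis, csum; simpl; cfin. Qed.
Lemma e31_b : e31 = cl_scal (RtoC (-1)) (cl_basis (true,false,true,false)).
Proof. bl; unfold e31, cl_mul, e3, e1, cl_scal, cl_basis, csum; simpl; cfin. Qed.
Lemma e23_b : e23 = cl_basis (false,true,true,false).
Proof. bl; unfold e23, cl_mul, e3, e2, cl_basis, csum; simpl; cfin. Qed.

Definition vpT (s : bool) : Cl4 := fun B =>
  match s, B with
  | true, (false,false,false,false) => RtoC (1/4)
  | true, (false,false,true,true) => (0, -1/4)%R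
  | true, (true,true,false,false) => (0, -1/4)%R
  | true, (true,true,true,true) => RtoC (-1/4)
  | false, (false,false,false,true) => (0, 1/4)%R
  | false, (false,false,true,false) => RtoC (1/4)
  | false, (true,true,false,true) => RtoC (1/4)
  | false, (true,true,true,false) => (0, -1/4)%R
  | _, _ => RtoC 0 end.
Definition vmT (s : bool) : Cl4 := fun B =>
  match s, B with
  | true, (false,true,false,true) => RtoC (-1/4)
  | true, (false,true,true,false) => (0, 1/4)%R
  | true, (true,false,false,true) => (0, 1/4)%R
  | true, (true,false,true,false) => RtoC (1/4)
  | false, (false,true,false,false) => (0, 1/4)%R
  | false, (false,true,true,true) => RtoC (1/4)
  | false, (true,false,false,false) => RtoC (1/4)
  | false, (true,false,true,true) => (0, -1/4)%R
  | _, _ => RtoC 0 end.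
Definition XT : Cl4 := fun B =>
  match B with
  | (false,true,true,false) => (0, 1/2)%R
  | (true,false,true,false) => RtoC (1/2)
  | _ => RtoC 0 end.

Lemma vp_T s : vplus s = vpT s.
Proof.
  unfold vplus, f12, f34, g34. rewrite e12_b, e34_b.
  destruct s; bl; unfold cl_mul, cl_add, cl_scal, cl_one, e3, e4, cl_basis, csum; simpl; cfin.
Qed.
Lemma vm_T s : vminus s = vmT s.
Proof.
  unfold vminus, f34, g12, g34. rewrite e34_b.
  destruct s; bl; unfold cl_mul, cl_add, cl_scal, cl_one, e1, e2, e3, e4, cl_basis, csum; simpl; cfin.
Qed.
Lemma X_T : Xcl = XT.
Proof.
  unfold Xcl, cl_opp. rewrite e31_b, e23_b.
  bl; unfold cl_add, cl_scal, cl_basis; simpl; cfin.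
Qed.

Definition sg (s : bool) : C := if s then RtoC 1 else RtoC (-1).

Lemma Xcl_vp s : cl_mul Xcl (vplus s) = cl_scal (sg s) (vminus s).
Proof.
  rewrite X_T, vp_T, vm_T.
  destruct s; bl; unfold sg, cl_mul, cl_scal, csum; simpl; cfin.
Qed.
Lemma Xcl_vm s : cl_mul Xcl (vminus s) = (fun _ => RtoC 0).
Proof.
  rewrite X_T, vm_T.
  destruct s; bl; unfold cl_mul, csum; simpl; cfin.
Qed.



Lemma csum_lin l f g a b : csum l (fun A => Cplus (Cmult a (f A)) (Cmult b (g A))) = Cplus (Cmult a (csum l f)) (Cmult b (csum l g)).
Proof. induction l; simpl. - apply injective_projections; simpl; ring. - rewrite IHl. ring. Qed.

Lemma cl_mul_lin X a V b W : cl_mul X (cl_add (cl_scal a V) (cl_scal b W)) = cl_add (cl_scal a (cl_mul X V)) (cl_scal b (cl_mul X W)).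
Proof.
  apply functional_extensionality; intros D. unfold cl_mul, cl_add, cl_scal.
  rewrite <- csum_lin. f_equal. apply functional_extensionality; intros A. ring.
Qed.

Lemma cl_mul_sp X s a b : cl_mul X (spinor_pair s a b) = cl_add (cl_scal a (cl_mul X (vplus s))) (cl_scal b (cl_mul X (vminus s))).
Proof. apply cl_mul_lin. Qed.

Definition pr (s : bool) (A B : Fs3) : Fn3 := fun x1 x2 x3 => spinor_pair s (A x1 x2 x3) (B x1 x2 x3).

Lemma pair_cder s (fa fb : R -> C) t a b : cder fa t a -> cder fb t b ->
  (fun D => DeriveC (fun u => spinor_pair s (fa u) (fb u) D) t) = spinor_pair s a b.
Proof.
  intros Ha Hb. apply functional_extensionality; intros D. apply cder_DeriveC.
  unfold spinor_pair, cl_add, cl_scal.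
  refine (cder_ext _ _ _ _ _ _ _ (cder_plus _ _ _ _ _ (cder_mult _ _ _ _ _ Ha (cder_const (vplus s D) t))
                                                     (cder_mult _ _ _ _ _ Hb (cder_const (vminus s D) t)))).
  - intros; reflexivity.
  - generalize (fa t) (fb t) (vplus s D) (vminus s D); intros. ring.
Qed.

Lemma d1_pr s A B x1 x2 x3 a b : cder (fun t => A t x2 x3) x1 a -> cder (fun t => B t x2 x3) x1 b ->
  Pilot.Defs.d1 (pr s A B) x1 x2 x3 = spinor_pair s a b.
Proof. intros H1 H2. exact (pair_cder s _ _ _ _ _ H1 H2). Qed.
Lemma d2_pr s A B x1 x2 x3 a b : cder (fun t => A x1 t x3) x2 a -> cder (fun t => B x1 t x3) x2 b ->
  Pilot.Defs.d2 (pr s A B) x1 x2 x3 = spinor_pair s a b.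
Proof. intros H1 H2. exact (pair_cder s _ _ _ _ _ H1 H2). Qed.
Lemma d3_pr s A B x1 x2 x3 a b : cder (fun t => A x1 x2 t) x3 a -> cder (fun t => B x1 x2 t) x3 b ->
  Pilot.Defs.d3 (pr s A B) x1 x2 x3 = spinor_pair s a b.
Proof. intros H1 H2. exact (pair_cder s _ _ _ _ _ H1 H2). Qed.

Lemma Xminus_pr s A A1 A2 A3 B B1 B2 B3 : HP A A1 A2 A3 -> HP B B1 B2 B3 ->
  Xminus (pr s A B) = pr s (fun x1 x2 x3 => DopV x1 x2 x3 (A1 x1 x2 x3) (A2 x1 x2 x3) (A3 x1 x2 x3))
     (fun x1 x2 x3 => Cplus (DopV x1 x2 x3 (B1 x1 x2 x3) (B2 x1 x2 x3) (B3 x1 x2 x3)) (Cmult (sg s) (A x1 x2 x3))).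
Proof.
  intros HA HB. apply functional_extensionality; intros x1. apply functional_extensionality; intros x2.
  apply functional_extensionality; intros x3.
  destruct (HA x1 x2 x3) as [HA1 [HA2 HA3]]. destruct (HB x1 x2 x3) as [HB1 [HB2 HB3]].
  unfold Xminus, dzbar.
  rewrite (d1_pr s _ _ _ _ _ _ _ HA1 HB1), (d2_pr s _ _ _ _ _ _ _ HA2 HB2), (d3_pr s _ _ _ _ _ _ _ HA3 HB3).
  unfold pr. rewrite cl_mul_sp, Xcl_vp, Xcl_vm.
  apply functional_extensionality; intros D. unfold spinor_pair, cl_add, cl_scal, DopV.
  generalize (vplus s D) (vminus s D) (A1 x1 x2 x3) (A2 x1 x2 x3) (A3 x1 x2 x3) (B1 x1 x2 x3) (B2 x1 x2 x3) (B3 x1 x2 x3) (A x1 x2 x3) (B x1 x2 x3) (RtoC (2 * x3)) (RtoC (1/2)) (sg s) (zc x1 x2); intros.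
  ring.
Qed.

Lemma HP_scal K A A1 A2 A3 : HP A A1 A2 A3 ->
  HP (fun x1 x2 x3 => Cmult K (A x1 x2 x3)) (fun x1 x2 x3 => Cmult K (A1 x1 x2 x3))
     (fun x1 x2 x3 => Cmult K (A2 x1 x2 x3)) (fun x1 x2 x3 => Cmult K (A3 x1 x2 x3)).
Proof. intros H x1 x2 x3. destruct (H x1 x2 x3) as [H1 [H2 H3]]. split; [|split]; apply cder_scal; auto. Qed.

Lemma DopV_scal x1 x2 x3 K a1 a2 a3 : DopV x1 x2 x3 (Cmult K a1) (Cmult K a2) (Cmult K a3) = Cmult K (DopV x1 x2 x3 a1 a2 a3).
Proof. unfold DopV. ring. Qed.

Definition c0 (k : nat) : C := RtoC (/ (INR (fact k) * 2 ^ k)).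

Lemma F_pr s k j : F s k j = pr s (fun x1 x2 x3 => Cmult (c0 k) (G k j x1 x2 x3))
   (fun x1 x2 x3 => Cmult (Cmult (sg s) (Cmult (RtoC (INR j)) (c0 k))) (G k (pred j) x1 x2 x3)).
Proof.
  induction j.
  - unfold F. simpl Nat.iter. unfold F0, pr.
    apply functional_extensionality; intros x1. apply functional_extensionality; intros x2.
    apply functional_extensionality; intros x3. apply functional_extensionality; intros D.
    unfold G, Gt, Mon, sumC, spinor_pair, cl_add, cl_scal, c0. rewrite alpha_0. simpl Nat.eqb.
    replace (k + 0 - 0)%nat with k by lia. simpl pow. simpl Cpow. simpl INR.
    generalize (vplus s D) (vminus s D) (Cpow (zbar x1 x2) k); intros. ring.
  - change (F s k (S j)) with (Xminus (F s k j)). rewrite IHj.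
    rewrite (Xminus_pr s _ _ _ _ _ _ _ _ (HP_scal (c0 k) _ _ _ _ (G_HP k j))
               (HP_scal (Cmult (sg s) (Cmult (RtoC (INR j)) (c0 k))) _ _ _ _ (G_HP k (pred j)))).
    unfold pr. apply functional_extensionality; intros x1. apply functional_extensionality; intros x2.
    apply functional_extensionality; intros x3. f_equal.
    + rewrite DopV_scal, G_step. reflexivity.
    + rewrite DopV_scal, G_step. simpl pred. destruct j.
      * simpl INR. ring.
      * simpl pred. rewrite (S_INR (S j)), RtoC_plus. ring.
Qed.


Lemma z2n_sub m k : (k <= m)%nat -> Z.to_nat (Z.of_nat m - Z.of_nat k) = (m - k)%nat.
Proof. intros H. rewrite <- Nat2Z.inj_sub by lia. apply Nat2Z.id. Qed.

Lemma cexpi_mult x y : Cmult (cexpi x) (cexpi y) = cexpi (x + y).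
Proof. unfold cexpi. apply injective_projections; simpl; rewrite ?cos_plus, ?sin_plus; ring. Qed.

Lemma cexpi_pow x n : Cpow (cexpi x) n = cexpi (INR n * x).
Proof.
  induction n.
  - unfold cexpi; simpl. rewrite Rmult_0_l, cos_0, sin_0. reflexivity.
  - rewrite Cpow_S, IHn, cexpi_mult, S_INR. f_equal. ring.
Qed.

Lemma Ci_zpow_pred n : Cmult (Ci_zpow (n - 1)) Ci = Ci_zpow n.
Proof.
  unfold Ci_zpow.
  destruct (Z.leb_spec0 0 (n - 1)) as [H1|H1]; destruct (Z.leb_spec0 0 n) as [H2|H2]; try lia.
  - replace (Z.to_nat n) with (S (Z.to_nat (n - 1))) by lia. rewrite Cpow_S. ring.
  - replace (Z.to_nat (- (n - 1))) with (S (Z.to_nat (- n))) by lia. rewrite Cpow_S.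
    replace (Z.to_nat n) with (Z.to_nat (- n)) by lia.
    assert (E : Cmult (Copp Ci) Ci = RtoC 1) by (apply injective_projections; simpl; ring).
    transitivity (Cmult (Cmult (Copp Ci) Ci) (Cpow (Copp Ci) (Z.to_nat (- n)))); [ring|].
    rewrite E. replace (Z.to_nat (- n)) with 0%nat by lia. simpl. ring.
  - replace (Z.to_nat (- (n - 1))) with (S (Z.to_nat (- n))) by lia. rewrite Cpow_S.
    assert (E : Cmult (Copp Ci) Ci = RtoC 1) by (apply injective_projections; simpl; ring).
    transitivity (Cmult (Cmult (Copp Ci) Ci) (Cpow (Copp Ci) (Z.to_nat (- n)))); [ring|].
    rewrite E. ring.
Qed.

Lemma Ci_sq' : Cmult Ci Ci = Copp (RtoC 1).
Proof. apply injective_projections; simpl; ring. Qed.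

Lemma Ci_pow2 a c : Cmult (Cpow Ci a) (Cpow Ci c) = Cmult (Cpow (Copp (RtoC 1)) c) (Ci_zpow (Z.of_nat a - Z.of_nat c)).
Proof.
  unfold Ci_zpow. destruct (Z.leb_spec0 0 (Z.of_nat a - Z.of_nat c)) as [H|H].
  - rewrite z2n_sub by lia. replace a with ((a - c) + c)%nat at 1 by lia.
    rewrite Cpow_add_r. rewrite <- Ci_sq', Cpow_mult_l. ring.
  - replace (Z.to_nat (- (Z.of_nat a - Z.of_nat c))) with (c - a)%nat by lia.
    set (d := (c - a)%nat). replace c with (a + d)%nat by (unfold d; lia).
    rewrite !Cpow_add_r.
    assert (E : Cmult (Copp (RtoC 1)) (Copp Ci) = Ci) by (apply injective_projections; simpl; ring).
    transitivity (Cmult (Cpow (Cmult Ci Ci) a) (Cpow Ci d)); [rewrite Cpow_mult_l; ring|].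
    rewrite Ci_sq'.
    transitivity (Cmult (Cpow (Copp (RtoC 1)) a) (Cpow (Cmult (Copp (RtoC 1)) (Copp Ci)) d)); [rewrite E; ring|].
    rewrite Cpow_mult_l. ring.
Qed.

Lemma m1_R : Copp (RtoC 1) = RtoC (-1).
Proof. apply injective_projections; simpl; ring. Qed.

Lemma Mon_sph a b c k m r th ph : (a + b + c = k)%nat -> (a + m = k + c)%nat ->
 Mon a b c (r * sin th * sin ph) (r * sin th * cos ph) (r * cos th)
 = Cmult (RtoC (r ^ k * sin th ^ (a + c) * cos th ^ b * (-1) ^ (a + c)))
     (Cmult (Ci_zpow (Z.of_nat k - Z.of_nat m)) (cexpi ((INR k - INR m) * ph))).
Proof.
  intros H1 H2.
  assert (zb : zbar (r * sin th * sin ph) (r * sin th * cos ph) = Cmult (RtoC (r * sin th)) (Cmult (Cmult (Copp (RtoC 1)) Ci) (cexpi ph))).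
  { unfold zbar, cexpi. apply injective_projections; simpl; ring. }
  assert (zz : zc (r * sin th * sin ph) (r * sin th * cos ph) = Cmult (RtoC (r * sin th)) (Cmult Ci (cexpi (- ph)))).
  { unfold zc, cexpi. rewrite cos_neg, sin_neg. apply injective_projections; simpl; ring. }
  unfold Mon. rewrite zb, zz, !Cpow_mult_l, !cexpi_pow.
  transitivity (Cmult (Cmult (Cmult (Cmult (Cpow (RtoC (r * sin th)) a) (RtoC ((r * cos th) ^ b)))
       (Cmult (Cpow (RtoC (r * sin th)) c) (Cpow (Copp (RtoC 1)) a))) (Cmult (Cpow Ci a) (Cpow Ci c)))
       (Cmult (cexpi (INR a * ph)) (cexpi (INR c * - ph)))).
  { ring. }
  rewrite Ci_pow2, cexpi_mult.
  replace (Z.of_nat a - Z.of_nat c)%Z with (Z.of_nat k - Z.of_nat m)%Z by lia.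
  replace (INR a * ph + INR c * - ph) with ((INR k - INR m) * ph).
  2:{ assert (E : INR a + INR m = INR k + INR c) by (rewrite <- !plus_INR; f_equal; lia). nra. }
  generalize (Ci_zpow (Z.of_nat k - Z.of_nat m)) (cexpi ((INR k - INR m) * ph)). intros Zc Ec.
  rewrite m1_R, <- !RtoC_pow.
  transitivity (Cmult (RtoC ((r * sin th) ^ a * (r * cos th) ^ b * ((r * sin th) ^ c * (-1) ^ a) * (-1) ^ c)) (Cmult Zc Ec)).
  { rewrite !RtoC_mult. ring. }
  f_equal. f_equal. rewrite <- H1, !Rpow_mult_distr, !pow_add. ring.
Qed.

Lemma legendre_sum k m t : Derive_n (fun u => (u ^ 2 - 1) ^ k) m t
  = sumR (fun c => alpha k m c * ((t ^ 2 - 1) ^ (k + c - m) * (t ^ (m - 2 * c) * (-1) ^ c))) m.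
Proof.
  rewrite (Derive_n_ext _ (fun t => Pf (-1) 0 (-1) t ^ k)) by (intros; unfold Pf; f_equal; ring).
  rewrite real_side. apply sumR_ext; intros c _. unfold termR, Pf, Qf.
  replace (-1 + 2 * 0 * t - -1 * t ^ 2) with (t ^ 2 - 1) by ring.
  replace (0 - -1 * t) with t by ring. reflexivity.
Qed.

Lemma half_sin k m a c th : 0 <= th <= PI -> ((k <= m)%nat \/ 0 < sin th) -> (a + m = k + c)%nat ->
 half_pow (1 - cos th ^ 2) (Z.of_nat m - Z.of_nat k) * sin th ^ (2 * a) = sin th ^ (a + c).
Proof.
  intros Hth Hc Hac.
  assert (Hs : 0 <= sin th) by (apply sin_ge_0; lra).
  unfold half_pow.
  replace (1 - cos th ^ 2) with (sin th ^ 2) by (rewrite <- (sin2_cos2 th); unfold Rsqr; ring).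
  rewrite sqrt_pow2 by exact Hs.
  destruct (Z.leb_spec0 0 (Z.of_nat m - Z.of_nat k)) as [H|H].
  - rewrite z2n_sub by lia. rewrite <- pow_add. f_equal. lia.
  - destruct Hc as [Hc|Hc]; [lia|].
    replace (Z.to_nat (- (Z.of_nat m - Z.of_nat k))) with (k - m)%nat by lia.
    replace (2 * a)%nat with ((a + c) + (k - m))%nat by lia. rewrite pow_add.
    field. apply pow_nonzero; lra.
Qed.

Lemma core k m r th ph : 0 <= th <= PI -> ((k <= m)%nat \/ 0 < sin th) ->
 Cmult (c0 k) (G k m (r * sin th * sin ph) (r * sin th * cos ph) (r * cos th))
 = Cmult (Cmult (Ci_zpow (Z.of_nat k - Z.of_nat m)) (Cmult (RtoC (r ^ k)) (cexpi ((INR k - INR m) * ph))))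
         (RtoC (assocLegendre (Z.of_nat m - Z.of_nat k) k (cos th))).
Proof.
  intros Hth Hc.
  unfold assocLegendre. replace (Z.of_nat m - Z.of_nat k + Z.of_nat k)%Z with (Z.of_nat m) by lia.
  destruct (Z.ltb_spec0 (Z.of_nat m) 0) as [H|H]; [lia|]. rewrite Nat2Z.id, legendre_sum.
  set (h := half_pow (1 - cos th ^ 2) (Z.of_nat m - Z.of_nat k)).
  set (c0r := / (INR (fact k) * 2 ^ k)).
  set (Zc := Ci_zpow (Z.of_nat k - Z.of_nat m)). set (Ec := cexpi ((INR k - INR m) * ph)).
  transitivity (sumC (fun c => Cmult (Cmult (Cmult Zc (Cmult (RtoC (r ^ k)) Ec)) (Cmult (RtoC c0r) (RtoC h)))
     (RtoC (alpha k m c * ((cos th ^ 2 - 1) ^ (k + c - m) * (cos th ^ (m - 2 * c) * (-1) ^ c))))) m).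
  2:{ rewrite sumC_scal, <- sumC_RtoC, !RtoC_mult. ring. }
  unfold c0, G. fold c0r. rewrite <- sumC_scal. apply sumC_ext; intros c _. unfold Gt.
  destruct (Req_dec (alpha k m c) 0) as [Z|Z].
  { rewrite Z, Rmult_0_l. ring. }
  apply alpha_inv in Z. destruct Z as [Z1 Z2].
  rewrite (Mon_sph _ _ _ k m) by lia. fold Zc Ec.
  set (a := (k + c - m)%nat). set (b := (m - 2 * c)%nat).
  assert (HR : h * (cos th ^ 2 - 1) ^ a = sin th ^ (a + c) * (-1) ^ a).
  { replace (cos th ^ 2 - 1) with (-1 * sin th ^ 2) by (rewrite <- (sin2_cos2 th); unfold Rsqr; ring).
    rewrite Rpow_mult_distr, <- pow_mult.
    rewrite <- (half_sin k m a c th Hth Hc) by (unfold a; lia). unfold h. ring. }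
  transitivity (Cmult (RtoC (c0r * (alpha k m c * (r ^ k * sin th ^ (a + c) * cos th ^ b * (-1) ^ (a + c))))) (Cmult Zc Ec)).
  { rewrite (RtoC_mult c0r), (RtoC_mult (alpha k m c)). ring. }
  transitivity (Cmult (RtoC (c0r * h * r ^ k * (alpha k m c * ((cos th ^ 2 - 1) ^ a * (cos th ^ b * (-1) ^ c))))) (Cmult Zc Ec)).
  2:{ rewrite (RtoC_mult (c0r * h * r ^ k)), (RtoC_mult (c0r * h)), (RtoC_mult c0r). ring. }
  apply (f_equal (fun x => Cmult (RtoC x) (Cmult Zc Ec))).
  transitivity (c0r * r ^ k * alpha k m c * cos th ^ b * (-1) ^ c * (h * (cos th ^ 2 - 1) ^ a)); [|ring].
  rewrite HR, !pow_add. generalize (-1); intro u. ring.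
Qed.

Lemma sp_scal K s a b : cl_scal K (spinor_pair s a b) = spinor_pair s (Cmult K a) (Cmult K b).
Proof.
  apply functional_extensionality; intros D. unfold cl_scal, spinor_pair, cl_add, cl_scal.
  generalize (vplus s D) (vminus s D); intros. ring.
Qed.

Theorem theorem3p4 :
  forall (s : bool) (k j : nat) (r theta phi : R),
    (j <= 2 * k + 1)%nat ->
    0 <= r ->
    - PI <= phi <= PI ->
    0 <= theta <= PI ->
    ((0 < theta < PI) \/ (k < j)%nat \/ k = 0%nat) ->
    F s k j (r * sin theta * sin phi) (r * sin theta * cos phi) (r * cos theta)
    = cl_scal
        (Cmult (Ci_zpow (Z.of_nat k - Z.of_nat j))
               (Cmult (RtoC (r ^ k))
                      (cexpi ((INR k - INR j) * phi))))
        (spinor_pair s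
           (RtoC (assocLegendre (Z.of_nat j - Z.of_nat k) k (cos theta)))
           (Cmult (Cmult (RtoC (if s then 1 else -1)) (Cmult Ci (RtoC (INR j))))
                  (Cmult (cexpi phi)
                         (RtoC (assocLegendre (Z.of_nat j - Z.of_nat k - 1) k (cos theta)))))).
Proof.
  intros s k j r theta phi Hj Hr Hphi Hth Hc.
  assert (Hs : 0 < theta < PI -> 0 < sin theta) by (intros; apply sin_gt_0; lra).
  rewrite F_pr. unfold pr. rewrite sp_scal. f_equal.
  - apply core; [exact Hth|]. destruct Hc as [H|[H|H]]; [right; auto|left; lia|left; lia].
  - destruct j as [|j'].
    + simpl INR. ring.
    + assert (Hc' : (k <= j')%nat \/ 0 < sin theta) by (destruct Hc as [H|[H|H]]; [right; auto|left; lia|left; lia]).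
      simpl pred.
      replace (Z.of_nat (S j') - Z.of_nat k - 1)%Z with (Z.of_nat j' - Z.of_nat k)%Z by lia.
      assert (EZ : Ci_zpow (Z.of_nat k - Z.of_nat j') = Cmult (Ci_zpow (Z.of_nat k - Z.of_nat (S j'))) Ci).
      { replace (Z.of_nat k - Z.of_nat (S j'))%Z with ((Z.of_nat k - Z.of_nat j') - 1)%Z by lia. symmetry. apply Ci_zpow_pred. }
      assert (EE : cexpi ((INR k - INR j') * phi) = Cmult (cexpi ((INR k - INR (S j')) * phi)) (cexpi phi)).
      { rewrite cexpi_mult, S_INR. f_equal. ring. }
      assert (Esg : sg s = RtoC (if s then 1 else -1)) by (destruct s; reflexivity).
      transitivity (Cmult (Cmult (sg s) (RtoC (INR (S j')))) (Cmult (c0 k) (G k j' (r * sin theta * sin phi) (r * sin theta * cos phi) (r * cos theta)))).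
      { ring. }
      rewrite (core k j' r theta phi Hth Hc'), EZ, EE, Esg.
      generalize (Ci_zpow (Z.of_nat k - Z.of_nat (S j'))) (cexpi ((INR k - INR (S j')) * phi)) (cexpi phi)
        (RtoC (if s then 1 else -1)) (RtoC (INR (S j'))); intros. ring.
Qed.
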